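(* Let $\tilde X,\tilde Y$ be $\mathbb{N}$-valued random variables with $\mathbb{E}[\tilde X^2+\tilde Y^2]<+\infty$, let $b_1,b_2>0$, $m_0>0$, and assume $b_1(\mathbb{E}[\tilde X]-1)+b_2\mathbb{E}[\tilde Y]=0$. Write $\hat p_{\tilde X}(z)=\mathbb{E}[z^{\tilde X}]$, $\hat p_{\tilde Y}(z)=\mathbb{E}[z^{\tilde Y}]$. Then the unique $C^1$ function $\hat g_\infty$ on $[0,1]$ with $\hat g_\infty(1)=1$ solving $$m_0b_2(\hat p_{\tilde Y}(z)-1)\,\hat g_\infty(z)+b_1(\hat p_{\tilde X}(z)-z)\,\partial_z\hat g_\infty(z)=0,\qquad z\in[0,1],$$ is $$\hat g_\infty(z)=\exp\Big\{-m_0\frac{b_2}{b_1}\int_z^1\frac{1-\hat p_{\tilde Y}(s)}{\hat p_{\tilde X}(s)-s}\,ds\Big\}.$$ Moreover $\hat g_\infty$ is the probability generating function of an infinitely divisible distribution $g_\infty$ on $\mathbb{N}$. Finally, $g_\infty$ is the density of a random variable $V_\infty$ satisfying $$V_\infty^*\stackrel{d}{=}V_\infty+1+\zeta+\sum_{k=1}^{\gamma}\xi_k,$$ where $V^*_\infty$ is the size-biased version of $V_\infty$, $\zeta$ has generating function $Q^*$, each $\xi_k$ has generating function $P^*$, $\gamma$ has the geometric distribution of parameter $m=\mathbb{E}[\tilde X]$, and $V_\infty,\zeta,\gamma,\xi_1,\xi_2,\dots$ are independent.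
   Context: Let $\phi_X(z)=\sum_{k\ge0}z^kP\{\tilde X>k\}$, $\phi_Y(z)=\sum_{k\ge0}z^kP\{\tilde Y>k\}$, $m=\mathbb{E}[\tilde X]$, $P^*(z)=m^{-1}\phi_X(z)$ and $Q^*(z)=\frac{b_2}{b_1}(1-m)^{-1}\phi_Y(z)$ (these are probability generating functions under the hypotheses). The geometric distribution of parameter $m$ is the law on $\mathbb{N}$ with generating function $(1-m)/(1-ms)$. For a random variable $V$ on $\mathbb{N}$ with density $g$ and finite mean $M_1(g)$, its size-biased version $V^*$ has density $g^*(k)=kg(k)/M_1(g)$. The displayed differential equation is the stationary equation of the linear equation $\partial_t\hat g=b_1(\hat p_{\tilde X}(z)-z)\partial_z\hat g+b_2m_0e^{\bar\alpha_1t}(\hat p_{\tilde Y}(z)-1)\hat g$ with $\bar\alpha_1=b_1(\mathbb{E}[\tilde X]-1)+b_2\mathbb{E}[\tilde Y]=0$. *)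

(* Defs.v *)
From Stdlib Require Import Reals.
From Coquelicot Require Import Coquelicot.
Open Scope R_scope.

Definition is_distr (p : nat -> R) : Prop :=
  (forall k, 0 <= p k) /\ is_series p 1.

Definition pgf (p : nat -> R) (z : R) : R := Series (fun k => p k * z ^ k).

Definition mean (p : nat -> R) : R := Series (fun k => INR k * p k).
Definition finite_second_moment (p : nat -> R) : Prop :=
  ex_series (fun k => INR k ^ 2 * p k).

Definition tail (p : nat -> R) (k : nat) : R := Series (fun j => p (k + 1 + j)%nat).

Definition phi (p : nat -> R) (z : R) : R := Series (fun k => tail p k * z ^ k).

Definition Pstar (pX : nat -> R) (z : R) : R := phi pX z / mean pX.
Definition Qstar (pX pY : nat -> R) (b1 b2 : R) (z : R) : R :=
  b2 / b1 / (1 - mean pX) * phi pY z.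

Definition ghat (pX pY : nat -> R) (b1 b2 m0 : R) (z : R) : R :=
  exp (- (m0 * (b2 / b1)
          * RInt (fun s => (1 - pgf pY s) / (pgf pX s - s)) z 1)).

Definition C1_on01 (h dh : R -> R) : Prop :=
  (forall z, 0 <= z <= 1 ->
     filterlim (fun y => (h y - h z) / (y - z))
       (within (fun y => 0 <= y <= 1 /\ y <> z) (locally z))
       (locally (dh z))) /\
  (forall z, 0 <= z <= 1 ->
     filterlim dh (within (fun y => 0 <= y <= 1) (locally z)) (locally (dh z))).

Definition solves_stationary (pX pY : nat -> R) (b1 b2 m0 : R)
    (h dh : R -> R) : Prop :=
  forall z, 0 <= z <= 1 ->
    m0 * b2 * (pgf pY z - 1) * h z + b1 * (pgf pX z - z) * dh z = 0.

Definition conv (p q : nat -> R) (n : nat) : R :=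
  sum_f_R0 (fun k => p k * q (n - k)%nat) n.

Definition dirac (a : nat) (n : nat) : R := if Nat.eqb n a then 1 else 0.

Fixpoint convpow (p : nat -> R) (n : nat) : nat -> R :=
  match n with
  | O => dirac 0
  | S n' => conv p (convpow p n')
  end.

Definition inf_divisible (g : nat -> R) : Prop :=
  forall n : nat, (1 <= n)%nat ->
    exists h : nat -> R, is_distr h /\ forall k, convpow h n k = g k.

Definition size_biased (g : nat -> R) (k : nat) : R := INR k * g k / mean g.

(* Law of sum_{k=1}^{gamma} xi_k with gamma, xi_1, xi_2, ... independent,
   gamma of law pg and the xi_k i.i.d. of law pxi. *)
Definition compound (pg pxi : nat -> R) (n : nat) : R :=
  Series (fun j => pg j * convpow pxi j n).

(* Main.v *)
Require Import Defs.
From Stdlib Require Import Reals Lra Lia Psatz.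
From Coquelicot Require Import Coquelicot.
Open Scope R_scope.

Lemma PSeries_eq a z : PSeries a z = Series (fun k => a k * z^k).
Proof. unfold PSeries. apply Series_ext. intro k. unfold scal; simpl; unfold mult; simpl. ring. Qed.

Lemma is_pseries_eq a z l : is_pseries a z l <-> is_series (fun k => a k * z^k) l.
Proof. apply is_pseries_R. Qed.

Lemma is_series_plusR a b la lb : is_series a la -> is_series b lb -> is_series (fun n => a n + b n) (la + lb).
Proof. apply (is_series_plus a b la lb). Qed.

Lemma is_series_scalR c a l : is_series a l -> is_series (fun n => c * a n) (c * l).
Proof. apply (is_series_scal_l c a l). Qed.

Lemma sum_mono a n m : (forall k, 0 <= a k) -> (n <= m)%nat -> sum_f_R0 a n <= sum_f_R0 a m.
Proof.
  intros Ha H. induction H. lra. simpl. specialize (Ha (S m)). lra.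
Qed.

Lemma bounded_series (a : nat -> R) M : (forall k, 0 <= a k) -> (forall N, sum_f_R0 a N <= M) ->
  ex_series a /\ Series a <= M.
Proof.
  intros Ha HM.
  destruct (growing_cv (sum_f_R0 a)) as [l Hl].
  - intro n. simpl. specialize (Ha (S n)). lra.
  - exists M. intros x [n ->]. apply HM.
  - assert (Hs : is_series a l) by (apply is_series_Reals; exact Hl).
    split. exists l; exact Hs.
    rewrite (is_series_unique a l Hs).
    apply Rnot_lt_le; intro H.
    destruct (Hl (l - M)) as [N HN]; [lra|].
    specialize (HN N (le_n _)). specialize (HM N). unfold R_dist in HN. apply Rabs_def2 in HN. lra.
Qed.

Lemma partial_le_series a N : (forall k, 0 <= a k) -> ex_series a -> sum_f_R0 a N <= Series a.
Proof.
  intros Ha [l Hl]. rewrite (is_series_unique _ _ Hl).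
  apply is_series_Reals in Hl.
  apply Rnot_lt_le; intro H.
  destruct (Hl (sum_f_R0 a N - l)) as [K HK]; [lra|].
  specialize (HK (max K N) (Nat.le_max_l _ _)).
  assert (sum_f_R0 a N <= sum_f_R0 a (max K N)) by (apply sum_mono; auto; lia).
  unfold R_dist in HK. apply Rabs_def2 in HK. lra.
Qed.

Lemma Series_ge0 a : (forall k, 0 <= a k) -> ex_series a -> 0 <= Series a.
Proof. intros Ha He. pose proof (partial_le_series a 0 Ha He). simpl in H. specialize (Ha 0%nat). lra. Qed.

Lemma term_le_sum a n : (forall k, 0 <= a k) -> a n <= sum_f_R0 a n.
Proof. intros Ha. destruct n. simpl; lra. simpl. pose proof (cond_pos_sum a n Ha). lra. Qed.

Lemma term_le_series a n : (forall k, 0 <= a k) -> ex_series a -> a n <= Series a.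
Proof. intros Ha He. eapply Rle_trans. apply term_le_sum; auto. apply partial_le_series; auto. Qed.

Lemma bern z N : 0 <= z <= 1 -> 1 - INR N * (1 - z) <= z ^ N.
Proof.
  intros Hz. induction N. simpl. lra.
  rewrite S_INR. simpl.
  pose proof (pow_le z N (proj1 Hz)).
  pose proof (pos_INR N).
  assert (z * (1 - INR N * (1 - z)) <= z * z ^ N) by (apply Rmult_le_compat_l; lra).
  assert (0 <= INR N * (1 - z) * (1 - z)) by (apply Rmult_le_pos; [apply Rmult_le_pos|]; lra).
  destruct (Rle_dec 0 (1 - INR N * (1 - z))); nra.
Qed.

Lemma pow_le1 z n : 0 <= z <= 1 -> z ^ n <= 1.
Proof. intros Hz. induction n. simpl; lra. simpl. pose proof (pow_le z n (proj1 Hz)). nra. Qed.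

Lemma pow_le_k z k N : 0 <= z <= 1 -> (k <= N)%nat -> z ^ N <= z ^ k.
Proof.
  intros Hz H. replace N with (k + (N - k))%nat by lia. rewrite pow_add.
  pose proof (pow_le z k (proj1 Hz)).
  assert (z ^ (N - k) <= 1) by (apply pow_le1; lra).
  nra.
Qed.

Lemma partial_pow b z N : (forall k, 0 <= b k) -> 0 <= z <= 1 ->
  z ^ N * sum_f_R0 b N <= sum_f_R0 (fun k => b k * z ^ k) N.
Proof.
  intros Hb Hz. rewrite scal_sum. apply sum_Rle. intros k Hk.
  apply Rmult_le_compat_l. auto. apply pow_le_k; auto.
Qed.

Lemma ex_pseries01 b z : (forall k, 0 <= b k) -> ex_series b -> 0 <= z <= 1 ->
  ex_series (fun k => b k * z ^ k).
Proof.
  intros Hb He Hz. apply (@ex_series_le R_AbsRing R_CompleteNormedModule _ b); auto.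
  intro n. change norm with Rabs. simpl. rewrite Rabs_mult, Rabs_pos_eq by auto.
  rewrite Rabs_pos_eq by (apply pow_le; lra).
  pose proof (pow_le1 z n Hz). pose proof (Hb n). pose proof (pow_le z n (proj1 Hz)). nra.
Qed.

Lemma pseries_le_series b z : (forall k, 0 <= b k) -> ex_series b -> 0 <= z <= 1 ->
  Series (fun k => b k * z ^ k) <= Series b.
Proof.
  intros Hb He Hz. apply Series_le; auto. intro n.
  pose proof (pow_le1 z n Hz). pose proof (Hb n). pose proof (pow_le z n (proj1 Hz)). split; nra.
Qed.

Lemma abel_nn b S : (forall k, 0 <= b k) -> is_series b S ->
  forall eps, 0 < eps -> exists d, 0 < d /\ forall z, 1 - d < z <= 1 ->
    Rabs (Series (fun k => b k * z ^ k) - S) < eps.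
Proof.
  intros Hb HS eps Heps.
  assert (He : ex_series b) by (exists S; auto).
  assert (HS0 : 0 <= S) by (rewrite <- (is_series_unique _ _ HS); apply Series_ge0; auto).
  pose proof HS as HS'. apply is_series_Reals in HS'.
  destruct (HS' (eps/2)) as [N HN]; [lra|].
  specialize (HN N (le_n _)). unfold R_dist in HN. apply Rabs_def2 in HN.
  assert (HsN : sum_f_R0 b N <= S) by (rewrite <- (is_series_unique _ _ HS); apply partial_le_series; auto).
  assert (Hs0 : 0 <= sum_f_R0 b N) by (apply cond_pos_sum; auto).
  pose proof (pos_INR N) as HNp.
  exists (Rmin 1 (eps / (2 * (INR N + 1) * (S + 1)))).
  split. apply Rmin_pos. lra. apply Rdiv_lt_0_compat. lra. nra.
  intros z Hz.
  assert (Hd1 := Rmin_l 1 (eps / (2 * (INR N + 1) * (S + 1)))).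
  assert (Hd2 := Rmin_r 1 (eps / (2 * (INR N + 1) * (S + 1)))).
  set (d := Rmin 1 (eps / (2 * (INR N + 1) * (S + 1)))) in *.
  assert (Hz' : 0 <= z <= 1) by lra.
  pose proof (pseries_le_series b z Hb He Hz') as Hup.
  rewrite (is_series_unique _ _ HS) in Hup.
  assert (Hlow : z ^ N * sum_f_R0 b N <= Series (fun k => b k * z ^ k)).
  { eapply Rle_trans. apply partial_pow; auto. apply partial_le_series.
    intro k. apply Rmult_le_pos; auto. apply pow_le; lra. apply ex_pseries01; auto. }
  pose proof (bern z N Hz') as Hbern.
  assert (Hk : INR N * (1 - z) * sum_f_R0 b N < eps / 2).
  { assert (1 - z < eps / (2 * (INR N + 1) * (S + 1))) by lra.
    assert (INR N * (1 - z) * sum_f_R0 b N <= (INR N + 1) * (1 - z) * (S + 1)).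
    { apply Rmult_le_compat. nra. lra. lra. lra. }
    assert ((INR N + 1) * (1 - z) * (S + 1) < (INR N + 1) * (eps / (2 * (INR N + 1) * (S + 1))) * (S + 1)).
    { apply Rmult_lt_compat_r. lra. apply Rmult_lt_compat_l. lra. auto. }
    replace ((INR N + 1) * (eps / (2 * (INR N + 1) * (S + 1))) * (S + 1)) with (eps/2) in H1 by (field; lra).
    lra. }
  assert ((1 - INR N * (1 - z)) * sum_f_R0 b N <= z ^ N * sum_f_R0 b N) by (apply Rmult_le_compat_r; auto).
  apply Rabs_def1; nra.
Qed.

Lemma bounded_pseries b M : (forall k, 0 <= b k) ->
  (forall z, 0 < z < 1 -> ex_series (fun k => b k * z ^ k) /\ Series (fun k => b k * z ^ k) <= M) ->
  ex_series b /\ Series b <= M.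
Proof.
  intros Hb HM. apply bounded_series; auto. intro N.
  apply Rnot_lt_le; intro HT. set (T := sum_f_R0 b N) in *.
  assert (HT0 : 0 <= T) by (apply cond_pos_sum; auto).
  pose proof (pos_INR N) as HNp.
  set (d := Rmin (1/2) ((T - M) / (2 * (INR N + 1) * (T + 1)))).
  assert (Hd1 := Rmin_l (1/2) ((T - M) / (2 * (INR N + 1) * (T + 1)))).
  assert (Hd2 := Rmin_r (1/2) ((T - M) / (2 * (INR N + 1) * (T + 1)))).
  assert (Hd0 : 0 < d). { apply Rmin_pos. lra. apply Rdiv_lt_0_compat. lra. nra. }
  fold d in Hd1, Hd2.
  destruct (HM (1 - d)) as [Hex Hle]; [lra|].
  assert (Hz' : 0 <= 1 - d <= 1) by lra.
  assert (Hlow : (1 - d) ^ N * T <= Series (fun k => b k * (1 - d) ^ k)).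
  { eapply Rle_trans. apply partial_pow; auto. apply partial_le_series; auto.
    intro k. apply Rmult_le_pos; auto. apply pow_le; lra. }
  pose proof (bern (1 - d) N Hz') as Hbern.
  replace (1 - (1 - d)) with d in Hbern by ring.
  assert (Hk : INR N * d * T <= (T - M) / 2).
  { assert (INR N * d * T <= (INR N + 1) * d * (T + 1)).
    { apply Rmult_le_compat. nra. lra. nra. lra. }
    assert ((INR N + 1) * d * (T + 1) <= (INR N + 1) * ((T - M) / (2 * (INR N + 1) * (T + 1))) * (T + 1)).
    { apply Rmult_le_compat_r. lra. apply Rmult_le_compat_l. lra. auto. }
    replace ((INR N + 1) * ((T - M) / (2 * (INR N + 1) * (T + 1))) * (T + 1)) with ((T - M)/2) in H0 by (field; lra).
    lra. }
  assert ((1 - INR N * d) * T <= (1 - d) ^ N * T) by (apply Rmult_le_compat_r; auto).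
  nra.
Qed.

Lemma finite_series a N : (forall k, (N < k)%nat -> a k = 0) -> is_series a (sum_f_R0 a N).
Proof.
  intros H. apply is_series_Reals. intros eps Heps. exists N. intros n Hn.
  assert (sum_f_R0 a n = sum_f_R0 a N).
  { induction Hn. reflexivity. simpl. rewrite IHHn. rewrite H by lia. ring. }
  rewrite H0. unfold R_dist. rewrite Rminus_diag, Rabs_R0. auto.
Qed.

Lemma series_sum_swap (a : nat -> nat -> R) (T : nat -> R) N :
  (forall n, is_series (fun j => a j n) (T n)) ->
  is_series (fun j => sum_f_R0 (fun n => a j n) N) (sum_f_R0 T N).
Proof.
  intros H. induction N. simpl. apply H.
  simpl. apply is_series_plusR; auto.
Qed.

Lemma tonelli (a : nat -> nat -> R) (s : nat -> R) S :
  (forall j n, 0 <= a j n) -> (forall j, is_series (a j) (s j)) -> is_series s S ->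
  (forall n, ex_series (fun j => a j n)) /\ is_series (fun n => Series (fun j => a j n)) S.
Proof.
  intros Ha Hs HS.
  assert (Hsnn : forall j, 0 <= s j).
  { intro j. rewrite <- (is_series_unique _ _ (Hs j)). apply Series_ge0; auto. exists (s j); auto. }
  assert (HSe : ex_series s) by (exists S; auto).
  assert (HSS : Series s = S) by (apply is_series_unique; auto).
  assert (Hajn : forall j n, a j n <= s j).
  { intros j n. rewrite <- (is_series_unique _ _ (Hs j)). apply term_le_series; auto. exists (s j); auto. }
  assert (Hcol : forall n, ex_series (fun j => a j n)).
  { intro n. apply (bounded_series _ S). auto. intro J.
    eapply Rle_trans. apply sum_Rle. intros j _. apply (Hajn j n).
    rewrite <- HSS. apply partial_le_series; auto. }
  split; auto.
  set (T := fun n => Series (fun j => a j n)).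
  assert (HT : forall n, is_series (fun j => a j n) (T n)) by (intro n; apply Series_correct; auto).
  assert (HTnn : forall n, 0 <= T n) by (intro n; apply Series_ge0; auto).
  assert (Hup : ex_series T /\ Series T <= S).
  { apply bounded_series; auto. intro N.
    pose proof (series_sum_swap a T N HT) as HW.
    rewrite <- (is_series_unique _ _ HW), <- HSS.
    apply Series_le; auto. intro j. split. apply cond_pos_sum. intro; auto.
    rewrite <- (is_series_unique _ _ (Hs j)). apply partial_le_series; auto. exists (s j); auto. }
  destruct Hup as [HTe HTS].
  assert (Hlow : Series s <= Series T).
  { apply bounded_series; auto. intro J.
    pose proof (series_sum_swap (fun n j => a j n) s J Hs) as HW. simpl in HW.
    rewrite <- (is_series_unique _ _ HW).
    apply Series_le; auto. intro n. split. apply cond_pos_sum. intro; auto.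
    unfold T. apply (partial_le_series (fun j => a j n)); auto. }
  replace S with (Series T) by lra. apply Series_correct; auto.
Qed.

Lemma conv_nn p q : (forall k, 0 <= p k) -> (forall k, 0 <= q k) -> forall n, 0 <= conv p q n.
Proof. intros Hp Hq n. unfold conv. apply cond_pos_sum. intro; apply Rmult_le_pos; auto. Qed.

Lemma dirac_nn a n : 0 <= dirac a n.
Proof. unfold dirac. destruct (Nat.eqb n a); lra. Qed.

Lemma convpow_nn p : (forall k, 0 <= p k) -> forall j n, 0 <= convpow p j n.
Proof. intros Hp j. induction j; intro n; simpl. apply dirac_nn. apply conv_nn; auto. Qed.

Lemma pgf_conv a b z A B : (forall k, 0 <= a k) -> (forall k, 0 <= b k) -> 0 <= z ->
  is_series (fun k => a k * z ^ k) A -> is_series (fun k => b k * z ^ k) B ->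
  is_series (fun n => conv a b n * z ^ n) (A * B).
Proof.
  intros Ha Hb Hz HA HB.
  pose proof (is_series_mult_pos _ _ _ _ HA HB) as H.
  eapply is_series_ext; [|apply H].
  2: intro; apply Rmult_le_pos; auto; apply pow_le; auto.
  2: intro; apply Rmult_le_pos; auto; apply pow_le; auto.
  intro n. simpl. unfold conv. rewrite Rmult_comm, scal_sum. apply sum_eq. intros k Hk.
  replace (z ^ n) with (z ^ k * z ^ (n - k)) by (rewrite <- pow_add; f_equal; lia). ring.
Qed.

Lemma dirac0_series z : is_series (fun n => dirac 0 n * z ^ n) 1.
Proof.
  replace 1 with (sum_f_R0 (fun n => dirac 0 n * z ^ n) 0) by (simpl; unfold dirac; simpl; ring).
  apply finite_series. intros k Hk. unfold dirac. destruct k. lia. simpl. ring.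
Qed.

Lemma dirac1_series z : is_series (fun n => dirac 1 n * z ^ n) z.
Proof.
  assert (E: sum_f_R0 (fun n => dirac 1 n * z ^ n) 1 = z) by (simpl; unfold dirac; simpl; ring).
  pattern z at 2; rewrite <- E.
  apply finite_series. intros k Hk. unfold dirac. destruct k. lia. destruct k. lia. simpl. ring.
Qed.

Lemma pgf_convpow q z Q : (forall k, 0 <= q k) -> 0 <= z ->
  is_series (fun k => q k * z ^ k) Q -> forall j, is_series (fun n => convpow q j n * z ^ n) (Q ^ j).
Proof.
  intros Hq Hz HQ j. induction j. simpl. apply dirac0_series.
  simpl. apply pgf_conv; auto. apply convpow_nn; auto.
Qed.

Lemma pgf_compound (w q : nat -> R) z Q W : (forall j, 0 <= w j) -> (forall k, 0 <= q k) -> 0 < z ->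
  is_series (fun k => q k * z ^ k) Q -> is_series (fun j => w j * Q ^ j) W ->
  (forall n, ex_series (fun j => w j * convpow q j n)) /\
  is_series (fun n => Series (fun j => w j * convpow q j n) * z ^ n) W.
Proof.
  intros Hw Hq Hz HQ HW.
  destruct (tonelli (fun j n => w j * (convpow q j n * z ^ n)) (fun j => w j * Q ^ j) W) as [H1 H2].
  - intros j n. apply Rmult_le_pos; auto. apply Rmult_le_pos. apply convpow_nn; auto. apply pow_le; lra.
  - intro j. apply is_series_scalR. apply pgf_convpow; auto. lra.
  - auto.
  - assert (Hzn : forall n, 0 < z ^ n) by (intro; apply pow_lt; auto).
    split.
    + intro n. destruct (H1 n) as [l Hl].
      exists (l * / z ^ n). eapply is_series_ext; [|apply (is_series_scal_r (/ z ^ n) _ _ Hl)].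
      intro j. simpl. field. specialize (Hzn n). lra.
    + eapply is_series_ext; [|apply H2]. intro n. simpl.
      rewrite <- Series_scal_r. apply Series_ext. intro j. ring.
Qed.

Lemma good_radius a : (forall k, 0 <= a k) ->
  (forall r, 0 < r < 1 -> ex_series (fun k => a k * r ^ k)) ->
  forall x, Rabs x < 1 -> Rbar_lt (Rabs x) (CV_radius a).
Proof.
  intros Ha Hr x Hx.
  set (r := (Rabs x + 1) / 2).
  assert (Hr0 : 0 < r < 1) by (pose proof (Rabs_pos x); unfold r; lra).
  assert (HD : CV_disk a r).
  { unfold CV_disk. eapply ex_series_ext; [|apply (Hr r Hr0)]. intro n.
    rewrite Rabs_pos_eq; auto. apply Rmult_le_pos; auto. apply pow_le; lra. }
  destruct (Lub_Rbar_correct (CV_disk a)) as [Hub _].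
  specialize (Hub r HD). fold (CV_radius a) in Hub.
  apply Rbar_lt_le_trans with (Finite r); auto. simpl. unfold r. pose proof (Rabs_pos x). lra.
Qed.

Lemma radius_minus a b : (forall x, Rabs x < 1 -> Rbar_lt (Rabs x) (CV_radius a)) ->
  (forall x, Rabs x < 1 -> Rbar_lt (Rabs x) (CV_radius b)) ->
  forall x, Rabs x < 1 -> Rbar_lt (Rabs x) (CV_radius (fun k => a k - b k)).
Proof.
  intros Ha Hb x Hx.
  set (r := (Rabs x + 1) / 2).
  assert (Hr0 : 0 < r < 1) by (pose proof (Rabs_pos x); unfold r; lra).
  assert (Hr1 : Rabs r < 1) by (rewrite Rabs_pos_eq; lra).
  assert (HD : CV_disk (fun k => a k - b k) r).
  { unfold CV_disk.
    apply (@ex_series_le R_AbsRing R_CompleteNormedModule _ (fun n => Rabs (a n * r ^ n) + Rabs (b n * r ^ n))).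
    intro n. change norm with Rabs. simpl. rewrite Rabs_Rabsolu.
    replace ((a n - b n) * r ^ n) with (a n * r ^ n + - (b n * r ^ n)) by ring.
    eapply Rle_trans. apply Rabs_triang. rewrite Rabs_Ropp. lra.
    apply (@ex_series_plus R_AbsRing R_NormedModule); apply CV_disk_inside; auto. }
  destruct (Lub_Rbar_correct (CV_disk (fun k => a k - b k))) as [Hub _].
  specialize (Hub r HD). fold (CV_radius (fun k => a k - b k)) in Hub.
  apply Rbar_lt_le_trans with (Finite r); auto. simpl. unfold r. pose proof (Rabs_pos x). lra.
Qed.

Lemma cont0_zero (f : R -> R) : continuity_pt f 0 -> (forall z, 0 < z < 1 -> f z = 0) -> f 0 = 0.
Proof.
  intros Hc Hz. destruct (Req_dec (f 0) 0) as [|Hne]; auto. exfalso.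
  destruct (Hc (Rabs (f 0))) as [al [Hal H]]. apply Rabs_pos_lt; auto.
  set (y := Rmin (al/2) (1/2)).
  assert (0 < y) by (apply Rmin_pos; lra).
  assert (y <= al/2) by apply Rmin_l. assert (y <= 1/2) by apply Rmin_r.
  specialize (H y). simpl in H. unfold R_dist in H. rewrite Hz in H by lra.
  rewrite Rminus_0_l, Rabs_Ropp in H. apply (Rlt_irrefl (Rabs (f 0))). apply H.
  split. split. constructor. lra. rewrite Rminus_0_r, Rabs_pos_eq; lra.
Qed.

Lemma zero_pseries n : forall e, (forall x, Rabs x < 1 -> Rbar_lt (Rabs x) (CV_radius e)) ->
  (forall z, 0 < z < 1 -> PSeries e z = 0) -> e n = 0.
Proof.
  induction n; intros e He Hz.
  - rewrite <- PSeries_0. apply cont0_zero; auto. apply PSeries_continuity. apply He. rewrite Rabs_R0; lra.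
  - assert (H0 : e 0%nat = 0).
    { rewrite <- PSeries_0. apply cont0_zero; auto. apply PSeries_continuity. apply He. rewrite Rabs_R0; lra. }
    change (e (S n)) with (PS_decr_1 e n). apply IHn.
    + intros x Hx. rewrite CV_radius_decr_1. auto.
    + intros z Hzz. pose proof (PSeries_decr_1_aux e z H0). rewrite Hz in H by auto.
      symmetry in H. apply Rmult_integral in H. destruct H; auto. lra.
Qed.

Lemma pseries_unique a b : (forall x, Rabs x < 1 -> Rbar_lt (Rabs x) (CV_radius a)) ->
  (forall x, Rabs x < 1 -> Rbar_lt (Rabs x) (CV_radius b)) ->
  (forall z, 0 < z < 1 -> PSeries a z = PSeries b z) -> forall n, a n = b n.
Proof.
  intros Ha Hb H n. apply Rminus_diag_uniq.
  apply (zero_pseries n (fun k => a k - b k)). apply radius_minus; auto.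
  intros z Hz. rewrite !PSeries_eq.
  assert (Rabs z < 1) by (rewrite Rabs_pos_eq; lra).
  assert (ea : ex_series (fun k => a k * z ^ k)) by (destruct (CV_radius_inside a z) as [l Hl]; auto; exists l; apply is_pseries_eq; auto).
  assert (eb : ex_series (fun k => b k * z ^ k)) by (destruct (CV_radius_inside b z) as [l Hl]; auto; exists l; apply is_pseries_eq; auto).
  rewrite (Series_ext _ (fun k => a k * z ^ k - b k * z ^ k)) by (intro; ring).
  rewrite Series_minus; auto. rewrite <- !PSeries_eq, H; auto. ring.
Qed.

Lemma pgf_unique a b : (forall k, 0 <= a k) -> (forall k, 0 <= b k) ->
  (forall z, 0 < z < 1 -> ex_series (fun k => a k * z ^ k)) ->
  (forall z, 0 < z < 1 -> ex_series (fun k => b k * z ^ k)) ->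
  (forall z, 0 < z < 1 -> Series (fun k => a k * z ^ k) = Series (fun k => b k * z ^ k)) ->
  forall n, a n = b n.
Proof.
  intros Ha Hb Ea Eb H. apply pseries_unique.
  apply good_radius; auto. apply good_radius; auto.
  intros z Hz. rewrite !PSeries_eq. auto.
Qed.

Lemma is_series_minusR a b la lb : is_series a la -> is_series b lb -> is_series (fun n => a n - b n) (la - lb).
Proof. intros. apply (is_series_minus a b la lb); auto. Qed.

Section Distr.
Variable p : nat -> R.
Hypothesis Hp : is_distr p.

Lemma d_nn k : 0 <= p k.
Proof. apply Hp. Qed.

Lemma d_ser : is_series p 1.
Proof. apply Hp. Qed.

Lemma pgf_ex z : 0 <= z <= 1 -> ex_series (fun k => p k * z ^ k).
Proof. intro Hz. apply ex_pseries01; auto. apply d_nn. exists 1; apply d_ser. Qed.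

Lemma pgf_is z : 0 <= z <= 1 -> is_series (fun k => p k * z ^ k) (pgf p z).
Proof. intro Hz. apply Series_correct. apply pgf_ex; auto. Qed.

Lemma pgf_1 : pgf p 1 = 1.
Proof. unfold pgf. rewrite (Series_ext _ p). apply is_series_unique, d_ser. intro; rewrite pow1; ring. Qed.

Lemma pgf_le1 z : 0 <= z <= 1 -> 0 <= pgf p z <= 1.
Proof.
  intro Hz. split. apply Series_ge0. intro; apply Rmult_le_pos; [apply d_nn|apply pow_le; lra]. apply pgf_ex; auto.
  rewrite <- pgf_1. unfold pgf. rewrite (Series_ext (fun k => p k * 1 ^ k) p) by (intro; rewrite pow1; ring).
  apply pseries_le_series; auto. apply d_nn. exists 1; apply d_ser.
Qed.

Lemma sum_le1 k : sum_f_R0 p k <= 1.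
Proof. rewrite <- (is_series_unique _ _ d_ser). apply partial_le_series. apply d_nn. exists 1; apply d_ser. Qed.

Lemma tail_eq k : tail p k = 1 - sum_f_R0 p k.
Proof.
  unfold tail. apply is_series_unique.
  eapply is_series_ext; [|apply (is_series_incr_n p (S k))]. intro j. simpl. f_equal. lia. lia.
  simpl. rewrite sum_n_Reals. match goal with |- is_series _ ?l => replace l with 1 end.
  apply d_ser. unfold plus; simpl. ring.
Qed.

Lemma tail_nn k : 0 <= tail p k.
Proof. rewrite tail_eq. pose proof (sum_le1 k). lra. Qed.

Lemma tail_le1 k : tail p k <= 1.
Proof. rewrite tail_eq. pose proof (cond_pos_sum p k d_nn). lra. Qed.

Lemma phi_is z : 0 <= z < 1 -> is_series (fun k => tail p k * z ^ k) ((1 - pgf p z) / (1 - z)).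
Proof.
  intro Hz.
  assert (Hg : is_series (fun k => z ^ k) (/ (1 - z))) by (apply is_series_geom; rewrite Rabs_pos_eq; lra).
  assert (Hg' : is_series (fun k => 1 * z ^ k) (/ (1 - z))) by (eapply is_series_ext; [|apply Hg]; intro; simpl; ring).
  pose proof (pgf_conv p (fun _ => 1) z (pgf p z) (/ (1 - z)) d_nn (fun _ => Rle_0_1) (proj1 Hz) (pgf_is z ltac:(lra)) Hg') as H.
  pose proof (is_series_minusR _ _ _ _ Hg H) as H2.
  replace ((1 - pgf p z) / (1 - z)) with (/ (1 - z) - pgf p z * / (1 - z)) by (field; lra).
  eapply is_series_ext; [|apply H2].
  intro n. simpl. rewrite tail_eq. unfold conv. rewrite (sum_eq _ p) by (intros; ring). ring.
Qed.

Lemma phi_eq z : 0 <= z < 1 -> phi p z = (1 - pgf p z) / (1 - z).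
Proof. intro; unfold phi; apply is_series_unique, phi_is; auto. Qed.

Lemma phi_ex z : 0 <= z <= 1 -> ex_series (fun k => tail p k * z ^ k) -> True.
Proof. auto. Qed.

Hypothesis Hm : ex_series (fun k => INR k * p k).

Lemma sum_ind_lt n : sum_f_R0 (fun k => if Nat.ltb k n then p n else 0) n = INR n * p n.
Proof.
  assert (forall m, (m <= n)%nat -> sum_f_R0 (fun k => if Nat.ltb k n then p n else 0) m = INR (S m) * p n - (if Nat.eqb m n then p n else 0)).
  { induction m; intro Hmn.
    - simpl. destruct n; simpl; ring.
    - simpl sum_f_R0. rewrite IHm by lia.
      destruct (Nat.eqb m n) eqn:E1. apply Nat.eqb_eq in E1; lia.
      destruct (Nat.ltb (S m) n) eqn:E2; destruct (Nat.eqb (S m) n) eqn:E3.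
      + apply Nat.ltb_lt in E2; apply Nat.eqb_eq in E3; lia.
      + rewrite !S_INR. ring.
      + rewrite !S_INR. ring.
      + apply Nat.ltb_ge in E2; apply Nat.eqb_neq in E3; lia. }
  rewrite H by lia. rewrite Nat.eqb_refl. rewrite S_INR. ring.
Qed.

Lemma mean_tail : is_series (tail p) (mean p).
Proof.
  destruct (tonelli (fun n k => if Nat.ltb k n then p n else 0) (fun n => INR n * p n) (mean p)) as [_ H].
  - intros j n. destruct (Nat.ltb n j). apply d_nn. lra.
  - intro n. rewrite <- sum_ind_lt. apply finite_series. intros k Hk.
    destruct (Nat.ltb k n) eqn:E. apply Nat.ltb_lt in E; lia. auto.
  - apply Series_correct; auto.
  - eapply is_series_ext; [|apply H]. intro k. simpl. rewrite tail_eq.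
    apply is_series_unique.
    assert (Hf : is_series (fun n => if Nat.leb n k then p n else 0) (sum_f_R0 p k)).
    { replace (sum_f_R0 p k) with (sum_f_R0 (fun n => if Nat.leb n k then p n else 0) k).
      apply finite_series. intros j Hj. destruct (Nat.leb j k) eqn:E. apply Nat.leb_le in E; lia. auto.
      apply sum_eq. intros i Hi. destruct (Nat.leb i k) eqn:E. auto. apply Nat.leb_gt in E; lia. }
    eapply is_series_ext; [|apply (is_series_minusR _ _ _ _ d_ser Hf)].
    intro n. simpl. destruct (Nat.ltb k n) eqn:E1; destruct (Nat.leb n k) eqn:E2.
    + apply Nat.ltb_lt in E1; apply Nat.leb_le in E2; lia.
    + ring.
    + ring.
    + apply Nat.ltb_ge in E1; apply Nat.leb_gt in E2; lia.
Qed.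

Lemma mean_nn : 0 <= mean p.
Proof. rewrite <- (is_series_unique _ _ mean_tail). apply Series_ge0. apply tail_nn. exists (mean p); apply mean_tail. Qed.

Lemma phi_le_mean z : 0 <= z <= 1 -> 0 <= phi p z <= mean p.
Proof.
  intro Hz. unfold phi. split.
  apply Series_ge0. intro; apply Rmult_le_pos; [apply tail_nn|apply pow_le; lra].
  apply ex_pseries01; auto. apply tail_nn. exists (mean p); apply mean_tail.
  rewrite <- (is_series_unique _ _ mean_tail). apply pseries_le_series; auto. apply tail_nn. exists (mean p); apply mean_tail.
Qed.

Lemma phi_lim eps : 0 < eps -> exists d, 0 < d /\ forall z, 1 - d < z <= 1 -> Rabs (phi p z - mean p) < eps.
Proof. intro He. apply abel_nn; auto. apply tail_nn. apply mean_tail. Qed.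

End Distr.

Lemma quot_cont a b : b < 1 -> forall eps, 0 < eps -> exists eta, 0 < eta /\
  forall u v, Rabs (u - a) < eta -> Rabs (v - b) < eta -> Rabs (u / (1 - v) - a / (1 - b)) < eps.
Proof.
  intros Hb eps He. set (D := 1 - b). assert (HD : 0 < D) by (unfold D; lra).
  set (K := D + Rabs a + 1). assert (HK : 0 < K) by (unfold K; pose proof (Rabs_pos a); lra).
  exists (Rmin (D/2) (eps * D * D / (2 * K))). split.
  apply Rmin_pos. lra. apply Rdiv_lt_0_compat. apply Rmult_lt_0_compat; [apply Rmult_lt_0_compat|]; lra. lra.
  intros u v Hu Hv.
  assert (E1 := Rmin_l (D/2) (eps * D * D / (2 * K))).
  assert (E2 := Rmin_r (D/2) (eps * D * D / (2 * K))).
  set (eta := Rmin (D/2) (eps * D * D / (2 * K))) in *.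
  pose proof (Rabs_pos a) as Ha0.
  assert (Hn : Rabs ((u - a) * D + a * (v - b)) < eta * K).
  { eapply Rle_lt_trans. apply Rabs_triang. rewrite !Rabs_mult, (Rabs_pos_eq D) by lra.
    pose proof (Rabs_pos (v - b)). pose proof (Rabs_pos (u - a)). unfold K. nra. }
  assert (HeK : eta * K <= eps * D * D / 2).
  { apply Rmult_le_compat_r with (r := K) in E2; [|lra].
    replace (eps * D * D / (2 * K) * K) with (eps * D * D / 2) in E2 by (field; lra). lra. }
  apply Rabs_def2 in Hv.
  assert (Hv1 : D / 2 < 1 - v) by (unfold D in *; lra).
  replace (u / (1 - v) - a / D) with (((u - a) * D + a * (v - b)) / ((1 - v) * D)) by (unfold D; field; lra).
  rewrite Rabs_div by nra. rewrite (Rabs_pos_eq ((1 - v) * D)) by nra.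
  apply Rlt_div_l. nra.
  assert (eps * D * D / 2 < eps * ((1 - v) * D)).
  { replace (eps * D * D / 2) with (eps * (D / 2 * D)) by field.
    apply Rmult_lt_compat_l; [lra|]. apply Rmult_lt_compat_r; lra. }
  lra.
Qed.

Lemma quot_from_derive f h z l : is_derive f z l -> (forall y, 0 <= y <= 1 -> f y = h y) -> 0 <= z <= 1 ->
  filterlim (fun y => (h y - h z) / (y - z)) (within (fun y => 0 <= y <= 1 /\ y <> z) (locally z)) (locally l).
Proof.
  intros Hd Hfh Hz. apply is_derive_Reals in Hd.
  apply filterlim_locally. intros eps. unfold within.
  destruct (Hd eps (cond_pos eps)) as [delta Hdel].
  exists delta. intros y Hy [Hy01 Hyz].
  change (Rabs ((h y - h z) / (y - z) - l) < eps).
  change (Rabs (y - z) < delta) in Hy.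
  rewrite <- !Hfh by auto.
  specialize (Hdel (y - z)). rewrite (Rplus_minus z y) in Hdel.
  apply Hdel; auto. intro E. apply Hyz. lra.
Qed.

Lemma derive_from_quot h l z : 0 < z < 1 ->
  filterlim (fun y => (h y - h z) / (y - z)) (within (fun y => 0 <= y <= 1 /\ y <> z) (locally z)) (locally l) ->
  is_derive h z l.
Proof.
  intros Hz H. apply is_derive_Reals. intros eps He.
  assert (Hb : locally l (ball l (mkposreal eps He))) by (exists (mkposreal eps He); auto).
  specialize (H _ Hb). destruct H as [d Hd].
  assert (Hp : 0 < Rmin d (Rmin z (1 - z))) by (apply Rmin_pos; [apply cond_pos|apply Rmin_pos; lra]).
  exists (mkposreal _ Hp). intros hh Hh0 Hhd. simpl in Hhd.
  pose proof (Rmin_l d (Rmin z (1 - z))). pose proof (Rmin_r d (Rmin z (1 - z))).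
  pose proof (Rmin_l z (1 - z)). pose proof (Rmin_r z (1 - z)).
  apply Rabs_def2 in Hhd as Hh'.
  specialize (Hd (z + hh)).
  replace (z + hh - z) with hh in Hd by ring.
  apply Hd. change (Rabs (z + hh - z) < d). replace (z + hh - z) with hh by ring. lra.
  split. lra. intro E. apply Hh0. lra.
Qed.

Lemma cont_from_quot h z l :
  filterlim (fun y => (h y - h z) / (y - z)) (within (fun y => 0 <= y <= 1 /\ y <> z) (locally z)) (locally l) ->
  forall eps, 0 < eps -> exists d, 0 < d /\ forall y, 0 <= y <= 1 -> Rabs (y - z) < d -> Rabs (h y - h z) < eps.
Proof.
  intros H eps He.
  assert (Hb : locally l (ball l (mkposreal 1 Rlt_0_1))) by (exists (mkposreal 1 Rlt_0_1); auto).
  specialize (H _ Hb). destruct H as [d Hd].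
  set (K := Rabs l + 1). assert (HK : 0 < K) by (unfold K; pose proof (Rabs_pos l); lra).
  exists (Rmin d (eps / K)). split. apply Rmin_pos. apply cond_pos. apply Rdiv_lt_0_compat; lra.
  intros y Hy Hyz. pose proof (Rmin_l d (eps / K)). pose proof (Rmin_r d (eps / K)).
  destruct (Req_dec y z) as [->|Hne]. rewrite Rminus_diag, Rabs_R0; lra.
  specialize (Hd y). simpl in Hd.
  assert (Hq : Rabs ((h y - h z) / (y - z) - l) < 1). { apply Hd. change (Rabs (y - z) < d). lra. split; auto. }
  assert (Hq' : Rabs ((h y - h z) / (y - z)) < K).
  { unfold K. pose proof (Rabs_triang ((h y - h z) / (y - z) - l) l) as Ht. replace ((h y - h z) / (y - z) - l + l) with ((h y - h z) / (y - z)) in Ht by ring. lra. }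
  replace (h y - h z) with ((h y - h z) / (y - z) * (y - z)) by (field; lra).
  rewrite Rabs_mult.
  assert (Rabs (y - z) < eps / K) by lra.
  apply Rle_lt_trans with (K * Rabs (y - z)). apply Rmult_le_compat_r. apply Rabs_pos. lra.
  replace eps with (K * (eps / K)) by (field; lra). apply Rmult_lt_compat_l; lra.
Qed.

Lemma cont_eps f x : continuity_pt f x -> forall eps, 0 < eps -> exists d, 0 < d /\ forall y, Rabs (y - x) < d -> Rabs (f y - f x) < eps.
Proof.
  intros H eps He. destruct (H eps He) as [d [Hd H2]]. exists d. split; auto.
  intros y Hy. destruct (Req_dec y x) as [->|Hne]. rewrite Rminus_diag, Rabs_R0; lra.
  apply (H2 y). split. split. constructor. auto. exact Hy.
Qed.

Lemma lim_eq (f g : R -> R) x : 0 <= x <= 1 ->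
  (forall eps, 0 < eps -> exists d, 0 < d /\ forall y, 0 < y < 1 -> Rabs (y - x) < d -> Rabs (f y - f x) < eps) ->
  (forall eps, 0 < eps -> exists d, 0 < d /\ forall y, 0 < y < 1 -> Rabs (y - x) < d -> Rabs (g y - g x) < eps) ->
  (forall y, 0 < y < 1 -> f y = g y) -> f x = g x.
Proof.
  intros Hx Hf Hg Hfg.
  apply Rminus_diag_uniq. apply Rabs_eq_0.
  apply Rle_antisym; [|apply Rabs_pos].
  apply Rnot_lt_le. intro Hpos.
  set (eps := Rabs (f x - g x) / 2).
  destruct (Hf eps) as [d1 [Hd1 H1]]. unfold eps; lra.
  destruct (Hg eps) as [d2 [Hd2 H2]]. unfold eps; lra.
  set (s := Rmin 1 (Rmin d1 d2) / 2).
  assert (Hs0 : 0 < s) by (unfold s; apply Rdiv_lt_0_compat; [apply Rmin_pos; [lra|apply Rmin_pos; auto]|lra]).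
  assert (Hs1 : s <= 1/2) by (unfold s; pose proof (Rmin_l 1 (Rmin d1 d2)); lra).
  assert (Hs2 : s < d1) by (unfold s; pose proof (Rmin_r 1 (Rmin d1 d2)); pose proof (Rmin_l d1 d2); lra).
  assert (Hs3 : s < d2) by (unfold s; pose proof (Rmin_r 1 (Rmin d1 d2)); pose proof (Rmin_r d1 d2); lra).
  set (y := x + s * (1/2 - x)).
  assert (Hy : 0 < y < 1) by (unfold y; nra).
  assert (Hyx : Rabs (y - x) < Rmin d1 d2).
  { unfold y. replace (x + s * (1 / 2 - x) - x) with (s * (1/2 - x)) by ring.
    rewrite Rabs_mult, Rabs_pos_eq by lra.
    assert (Rabs (1/2 - x) <= 1/2) by (apply Rabs_le; lra).
    pose proof (Rmin_l d1 d2). pose proof (Rmin_r d1 d2).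
    apply Rle_lt_trans with (s * (1/2)). apply Rmult_le_compat_l; lra.
    apply Rmin_glb_lt; lra. }
  specialize (H1 y Hy ltac:(pose proof (Rmin_l d1 d2); lra)).
  specialize (H2 y Hy ltac:(pose proof (Rmin_r d1 d2); lra)).
  rewrite Hfg in H1 by auto.
  pose proof (Rabs_triang (g y - f x) (g x - g y)).
  replace (g y - f x + (g x - g y)) with (- (f x - g x)) in H by ring.
  rewrite Rabs_Ropp in H. rewrite Rabs_minus_sym in H2. unfold eps in *. lra.
Qed.

Lemma locally_ball (x d : R) (P : R -> Prop) : 0 < d -> (forall y, Rabs (y - x) < d -> P y) -> locally x P.
Proof. intros Hd H. exists (mkposreal d Hd). intros y Hy. apply H. exact Hy. Qed.

Lemma cont_pt_eq f x : continuity_pt f x <-> continuous f x.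
Proof. apply continuity_pt_filterlim. Qed.

Section Main.
Variables (pX pY : nat -> R) (b1 b2 : R).
Hypotheses (HX : is_distr pX) (HY : is_distr pY)
  (HmX : ex_series (fun k => INR k * pX k)) (HmY : ex_series (fun k => INR k * pY k))
  (Hb1 : 0 < b1) (Hb2 : 0 < b2) (HYnd : 0 < mean pY)
  (Hcrit : b1 * (mean pX - 1) + b2 * mean pY = 0).

Definition Lc := mean pY / (1 - mean pX).

Lemma m_lt1 : mean pX < 1.
Proof. nra. Qed.

Lemma m_nn : 0 <= mean pX.
Proof. apply mean_nn; auto. Qed.

Lemma Lc_eq : Lc = b1 / b2.
Proof. unfold Lc. pose proof m_lt1. field_simplify_eq. nra. lra. Qed.

Lemma Lc_pos : 0 < Lc.
Proof. rewrite Lc_eq. apply Rdiv_lt_0_compat; auto. Qed.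

Lemma phi_abs p (Hp : is_distr p) (Hm : ex_series (fun k => INR k * p k)) s :
  Rabs s <= 1 -> Rabs (phi p s) <= phi p (Rabs s).
Proof.
  intro Hs. unfold phi.
  assert (E : forall k, Rabs (tail p k * s ^ k) = tail p k * Rabs s ^ k).
  { intro k. rewrite Rabs_mult, Rabs_pos_eq by (apply tail_nn; auto). rewrite RPow_abs. auto. }
  rewrite <- (Series_ext _ _ E). apply Series_Rabs.
  apply (ex_series_ext (fun k => tail p k * Rabs s ^ k)). intro; rewrite E; auto.
  apply ex_pseries01. apply tail_nn; auto. exists (mean p). apply mean_tail; auto.
  split; auto. apply Rabs_pos.
Qed.

Lemma phiX_bound s : Rabs s <= 1 -> Rabs (phi pX s) <= mean pX.
Proof.
  intro Hs. eapply Rle_trans. apply phi_abs; auto.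
  apply phi_le_mean; auto. split; auto. apply Rabs_pos.
Qed.

Lemma phi_radius p (Hp : is_distr p) (Hm : ex_series (fun k => INR k * p k)) :
  forall x, Rabs x < 1 -> Rbar_lt (Rabs x) (CV_radius (tail p)).
Proof.
  apply good_radius. apply tail_nn; auto. intros r Hr.
  apply ex_pseries01. apply tail_nn; auto. exists (mean p). apply mean_tail; auto. lra.
Qed.

Lemma phi_cont p (Hp : is_distr p) (Hm : ex_series (fun k => INR k * p k)) s :
  Rabs s < 1 -> continuity_pt (phi p) s.
Proof.
  intro Hs. apply (continuity_pt_ext (PSeries (tail p))). intro x. rewrite PSeries_eq. auto.
  apply PSeries_continuity. apply phi_radius; auto.
Qed.

Definition Fr s := phi pY s / (1 - phi pX s).
Definition Ft s := if Rlt_dec s 1 then Fr s else Lc.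

Lemma den_pos s : Rabs s <= 1 -> 0 < 1 - phi pX s.
Proof. intro Hs. pose proof (phiX_bound s Hs). pose proof m_lt1. pose proof (Rle_abs (phi pX s)). lra. Qed.

Lemma Fr_cont s : Rabs s < 1 -> continuity_pt Fr s.
Proof.
  intro Hs. apply (continuity_pt_ext (fun x => phi pY x / (fun x => 1 - phi pX x) x)). intro; reflexivity.
  apply continuity_pt_div. apply phi_cont; auto.
  apply (continuity_pt_ext ((fun _ => 1) - phi pX)%F). intro; reflexivity.
  apply continuity_pt_minus. apply continuity_pt_const. intros a b; auto. apply phi_cont; auto.
  pose proof (den_pos s ltac:(lra)). lra.
Qed.

Lemma Ft_lt s : s < 1 -> Ft s = Fr s.
Proof. intro. unfold Ft. destruct (Rlt_dec s 1); [auto|lra]. Qed.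

Lemma Ft_ge s : 1 <= s -> Ft s = Lc.
Proof. intro. unfold Ft. destruct (Rlt_dec s 1); [lra|auto]. Qed.

Lemma Ft_cont1 : continuity_pt Ft 1.
Proof.
  unfold continuity_pt, continue_in, limit1_in, limit_in. intros eps He. simpl. unfold R_dist.
  destruct (quot_cont (mean pY) (mean pX) m_lt1 eps He) as [eta [Heta Hq]].
  destruct (phi_lim pY HY HmY eta Heta) as [d1 [Hd1 H1]].
  destruct (phi_lim pX HX HmX eta Heta) as [d2 [Hd2 H2]].
  exists (Rmin d1 d2). split. apply Rmin_pos; auto.
  intros x [_ Hx]. pose proof (Rmin_l d1 d2). pose proof (Rmin_r d1 d2).
  rewrite (Ft_ge 1) by lra. apply Rabs_def2 in Hx.
  destruct (Rlt_dec x 1).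
  - rewrite Ft_lt by auto. unfold Fr, Lc. apply Hq. apply H1; lra. apply H2; lra.
  - rewrite Ft_ge by lra. rewrite Rminus_diag, Rabs_R0. auto.
Qed.

Lemma Ft_cont s : -1 < s -> continuous Ft s.
Proof.
  intro Hs. destruct (Rlt_le_dec s 1) as [Hs1|Hs1].
  - apply (continuous_ext_loc Ft Fr s).
    + apply (locally_ball s (Rmin (1 - s) (s + 1))). apply Rmin_pos; lra.
      intros y Hy. pose proof (Rmin_l (1 - s) (s + 1)). apply Rabs_def2 in Hy. rewrite Ft_lt; auto. lra.
    + apply cont_pt_eq. apply Fr_cont. apply Rabs_def1; lra.
  - destruct (Req_dec s 1) as [->|Hne]. apply cont_pt_eq, Ft_cont1.
    apply (continuous_ext_loc Ft (fun _ => Lc) s).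
    + apply (locally_ball s (s - 1)). lra. intros y Hy. apply Rabs_def2 in Hy. rewrite Ft_ge; auto. lra.
    + apply filterlim_const.
Qed.

Lemma Ft_bounds s : 0 <= s <= 1 -> 0 <= Ft s <= Lc.
Proof.
  intro Hs. pose proof Lc_pos. destruct (Rlt_dec s 1).
  - rewrite Ft_lt by auto. unfold Fr, Lc.
    pose proof (phi_le_mean pY HY HmY s Hs). pose proof (phi_le_mean pX HX HmX s Hs). pose proof m_lt1.
    split. apply Rle_mult_inv_pos. lra. lra.
    unfold Rdiv. apply Rmult_le_compat. lra. left; apply Rinv_0_lt_compat; lra. lra.
    apply Rinv_le_contravar; lra.
  - rewrite Ft_ge by lra. lra.
Qed.

Lemma Ft_orig s : 0 <= s < 1 -> Ft s = (1 - pgf pY s) / (pgf pX s - s) /\ 0 < pgf pX s - s.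
Proof.
  intro Hs. rewrite Ft_lt by lra. unfold Fr.
  pose proof (phi_eq pX HX s Hs) as EX. pose proof (phi_eq pY HY s Hs) as EY.
  pose proof (den_pos s ltac:(rewrite Rabs_pos_eq; lra)) as Hd.
  assert (EX' : pgf pX s = 1 - (1 - s) * phi pX s) by (rewrite EX; field; lra).
  assert (EY' : pgf pY s = 1 - (1 - s) * phi pY s) by (rewrite EY; field; lra).
  assert (Hp : 0 < pgf pX s - s) by (rewrite EX'; nra).
  split; auto. rewrite EX', EY'. field. split; lra.
Qed.

Definition I z := RInt Ft z 1.

Lemma Ft_exRInt a b : -1 < a -> -1 < b -> ex_RInt Ft a b.
Proof.
  intros Ha Hb. apply (@ex_RInt_continuous R_CompleteNormedModule). intros z Hz. apply Ft_cont.
  unfold Rmin in Hz. destruct (Rle_dec a b); lra.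
Qed.

Lemma I_deriv z : -1 < z -> is_derive I z (- Ft z).
Proof.
  intro Hz. apply (is_derive_RInt' Ft I z 1).
  - apply (locally_ball z (z + 1)). lra. intros y Hy. apply Rabs_def2 in Hy.
    apply (@RInt_correct R_CompleteNormedModule). apply Ft_exRInt; lra.
  - apply Ft_cont; auto.
Qed.

Lemma I_1 : I 1 = 0.
Proof. unfold I. rewrite RInt_point. reflexivity. Qed.

Lemma I_nn z : 0 <= z <= 1 -> 0 <= I z.
Proof.
  intro Hz. unfold I. apply RInt_ge_0. lra. apply Ft_exRInt; lra.
  intros x Hx. apply Ft_bounds. lra.
Qed.

Definition G c z := exp (- (c * I z)).

Lemma G_deriv c z : -1 < z -> is_derive (G c) z (G c z * (c * Ft z)).
Proof.
  intro Hz.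
  pose proof (is_derive_scal I z c _ (I_deriv z Hz)) as H1.
  pose proof (is_derive_opp _ _ _ H1) as H2.
  pose proof (is_derive_comp exp (fun x => opp (c * I x)) z _ _ (is_derive_exp _) H2) as H3.
  unfold G. replace (exp (- (c * I z)) * (c * Ft z)) with (scal (opp (c * - Ft z)) (exp (opp (c * I z)))).
  exact H3. unfold scal, opp; simpl; unfold mult; simpl. ring.
Qed.

Lemma G_cont c z : -1 < z -> continuous (G c) z.
Proof. intro Hz. apply (@ex_derive_continuous R_AbsRing R_NormedModule). eexists. apply G_deriv; auto. Qed.

Lemma G_1 c : G c 1 = 1.
Proof. unfold G. rewrite I_1, Rmult_0_r, Ropp_0. apply exp_0. Qed.

Lemma G_bounds c z : 0 <= c -> 0 <= z <= 1 -> 0 < G c z <= 1.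
Proof.
  intros Hc Hz. unfold G. split. apply exp_pos.
  rewrite <- exp_0. pose proof (I_nn z Hz).
  destruct (Req_dec (c * I z) 0) as [E|E]. rewrite E, Ropp_0. lra.
  left. apply exp_increasing. assert (0 <= c * I z) by (apply Rmult_le_pos; auto). lra.
Qed.

Lemma ghat_G m0 z : 0 <= z <= 1 -> ghat pX pY b1 b2 m0 z = G (m0 * (b2 / b1)) z.
Proof.
  intro Hz. unfold ghat, G, I. do 3 f_equal. apply RInt_ext. intros x Hx.
  rewrite Rmin_left, Rmax_right in Hx by lra. symmetry. apply Ft_orig. lra.
Qed.

Lemma dg_cont c z : -1 < z -> continuity_pt (fun z => G c z * (c * Ft z)) z.
Proof.
  intro Hz. apply (continuity_pt_ext (G c * (fct_cte c * Ft))%F). intro; reflexivity.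
  apply continuity_pt_mult. apply cont_pt_eq, G_cont; auto.
  apply continuity_pt_mult. apply continuity_pt_const. intros a b; reflexivity.
  apply cont_pt_eq, Ft_cont; auto.
Qed.

Lemma sol_exists m0 : exists dg : R -> R,
      C1_on01 (ghat pX pY b1 b2 m0) dg /\
      solves_stationary pX pY b1 b2 m0 (ghat pX pY b1 b2 m0) dg.
Proof.
  set (c := m0 * (b2 / b1)).
  exists (fun z => G c z * (c * Ft z)). split. split.
  - intros z Hz. apply (quot_from_derive (G c)). apply G_deriv; lra.
    intros y Hy. rewrite ghat_G; auto. auto.
  - intros z Hz. apply (filterlim_filter_le_1 _ (filter_le_within _)).
    exact (proj1 (cont_pt_eq (fun z => G c z * (c * Ft z)) z) (dg_cont c z ltac:(lra))).
  - intros z Hz. rewrite ghat_G by auto. fold c.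
    destruct (Rlt_dec z 1).
    + destruct (Ft_orig z ltac:(lra)) as [E Hp]. rewrite E. unfold c. field. lra.
    + replace z with 1 by lra. rewrite !pgf_1 by auto. ring.
Qed.

Lemma sol_unique m0 : forall h dh : R -> R,
      C1_on01 h dh -> h 1 = 1 -> solves_stationary pX pY b1 b2 m0 h dh ->
      forall z, 0 <= z <= 1 -> h z = ghat pX pY b1 b2 m0 z.
Proof.
  intros h dh [Hq Hc] H1 Hs.
  set (c := m0 * (b2 / b1)).
  set (E := fun y => exp (c * I y)).
  set (u := fun y => h y * E y).
  assert (HE : forall y, -1 < y -> is_derive E y (E y * (c * - Ft y))).
  { intros y Hy. unfold E.
    pose proof (is_derive_comp exp (fun x => c * I x) y _ _ (is_derive_exp _) (is_derive_scal I y c _ (I_deriv y Hy))) as H3.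
    replace (exp (c * I y) * (c * - Ft y)) with (scal (c * - Ft y) (exp (c * I y))). exact H3.
    unfold scal; simpl; unfold mult; simpl. ring. }
  assert (Hu : forall y, 0 < y < 1 -> is_derive u y 0).
  { intros y Hy.
    assert (Hh : is_derive h y (dh y)) by (apply derive_from_quot; auto; apply Hq; lra).
    pose proof (is_derive_mult h E y _ _ Hh (HE y ltac:(lra)) (fun a b => Rmult_comm a b)) as Hm.
    destruct (Ft_orig y ltac:(lra)) as [EF Hp].
    assert (Hdh : dh y = c * Ft y * h y).
    { specialize (Hs y ltac:(lra)). rewrite EF. unfold c.
      assert (Hne : b1 * (pgf pX y - y) <> 0) by nra.
      replace (dh y) with ((b1 * (pgf pX y - y) * dh y) / (b1 * (pgf pX y - y))) by (field; repeat split; lra).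
      replace (b1 * (pgf pX y - y) * dh y) with (- (m0 * b2 * (pgf pY y - 1) * h y)) by lra.
      field. lra. }
    replace 0 with (plus (mult (dh y) (E y)) (mult (h y) (E y * (c * - Ft y)))). exact Hm.
    unfold plus, mult; simpl. rewrite Hdh. ring. }
  assert (Hconst : forall a b, 0 < a < 1 -> 0 < b < 1 -> u a = u b).
  { intros a b Ha Hb. destruct (MVT_gen u a b (fun _ => 0)) as [x [Hx Hx2]].
    - intros x Hx. apply Hu. unfold Rmin, Rmax in Hx. destruct (Rle_dec a b); lra.
    - intros x Hx. apply cont_pt_eq. apply (@ex_derive_continuous R_AbsRing R_NormedModule).
      eexists. apply Hu. unfold Rmin, Rmax in Hx. destruct (Rle_dec a b); lra.
    - lra. }
  set (v := u (1/2)).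
  assert (Hhv : forall y, 0 < y < 1 -> h y = v * G c y).
  { intros y Hy. unfold v. rewrite <- (Hconst y) by lra. unfold u, E, G.
    rewrite Rmult_assoc, <- exp_plus. replace (c * I y + - (c * I y)) with 0 by ring. rewrite exp_0. ring. }
  assert (HhC : forall x, 0 <= x <= 1 -> forall eps, 0 < eps -> exists d, 0 < d /\ forall y, 0 < y < 1 -> Rabs (y - x) < d -> Rabs (h y - h x) < eps).
  { intros x Hx eps He. destruct (cont_from_quot h x (dh x) (Hq x Hx) eps He) as [d [Hd Hd2]].
    exists d. split; auto. intros y Hy Hyx. apply Hd2; auto. lra. }
  assert (HGC : forall x, 0 <= x <= 1 -> forall eps, 0 < eps -> exists d, 0 < d /\ forall y, 0 < y < 1 -> Rabs (y - x) < d -> Rabs (v * G c y - v * G c x) < eps).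
  { intros x Hx eps He.
    assert (Hct : continuity_pt (fun y => v * G c y) x).
    { apply (continuity_pt_ext (mult_real_fct v (G c))). intro; reflexivity.
      apply continuity_pt_scal. apply cont_pt_eq, G_cont. lra. }
    destruct (cont_eps _ x Hct eps He) as [d [Hd Hd2]]. exists d. split; auto. }
  assert (Hv1 : v = 1).
  { pose proof (lim_eq h (fun y => v * G c y) 1 ltac:(lra) (HhC 1 ltac:(lra)) (HGC 1 ltac:(lra)) Hhv) as Hl.
    cbv beta in Hl. rewrite G_1, H1 in Hl. lra. }
  intros z Hz. rewrite ghat_G by auto. fold c.
  pose proof (lim_eq h (fun y => v * G c y) z Hz (HhC z Hz) (HGC z Hz) Hhv) as Hl.
  cbv beta in Hl. rewrite Hl, Hv1. ring.
Qed.

Definition Gx k := Series (fun j => 1 * convpow (tail pX) j k).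
Definition fco := conv (tail pY) Gx.

Lemma phi_is' p (Hp : is_distr p) (Hm : ex_series (fun k => INR k * p k)) s : 0 <= s <= 1 ->
  is_series (fun k => tail p k * s ^ k) (phi p s).
Proof.
  intro Hs. apply Series_correct. apply ex_pseries01; auto. apply tail_nn; auto. exists (mean p); apply mean_tail; auto.
Qed.

Lemma Gx_facts s : 0 < s < 1 -> (forall k, ex_series (fun j => 1 * convpow (tail pX) j k)) /\
  is_series (fun k => Gx k * s ^ k) (/ (1 - phi pX s)).
Proof.
  intro Hs.
  assert (HQ := phi_le_mean pX HX HmX s ltac:(lra)). pose proof m_lt1.
  apply (pgf_compound (fun _ => 1) (tail pX) s (phi pX s)).
  - intro; lra.
  - apply tail_nn; auto.
  - lra.
  - apply phi_is'; auto; lra.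
  - eapply is_series_ext; [|apply is_series_geom]. intro; simpl; ring. rewrite Rabs_pos_eq; lra.
Qed.

Lemma Gx_nn k : 0 <= Gx k.
Proof.
  destruct (Gx_facts (1/2) ltac:(lra)) as [H _]. apply Series_ge0; auto.
  intro j. rewrite Rmult_1_l. apply convpow_nn. apply tail_nn; auto.
Qed.

Lemma fco_nn k : 0 <= fco k.
Proof. apply conv_nn. apply tail_nn; auto. apply Gx_nn. Qed.

Lemma fco_series s : 0 < s < 1 -> is_series (fun k => fco k * s ^ k) (Ft s).
Proof.
  intro Hs. rewrite Ft_lt by lra. unfold Fr, Rdiv. apply pgf_conv.
  apply tail_nn; auto. apply Gx_nn. lra. apply phi_is'; auto; lra. apply Gx_facts; auto.
Qed.

Lemma fco_radius : forall x, Rabs x < 1 -> Rbar_lt (Rabs x) (CV_radius fco).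
Proof. apply good_radius. apply fco_nn. intros r Hr. exists (Ft r). apply fco_series; auto. Qed.

Lemma RInt_0z z : 0 < z < 1 -> RInt Ft 0 z = PSeries (PS_Int fco) z.
Proof.
  intro Hz. rewrite <- RInt_PSeries. apply RInt_ext.
  intros x Hx. rewrite Rmin_left, Rmax_right in Hx by lra.
  rewrite PSeries_eq. symmetry. apply is_series_unique. apply fco_series. lra.
  apply fco_radius. rewrite Rabs_pos_eq; lra.
Qed.

Lemma ps_at c z : 0 < z < 1 -> is_series (fun k => c * PS_Int fco k * z ^ k) (c * RInt Ft 0 z).
Proof.
  intro Hz.
  assert (Hr : Rbar_lt (Rabs z) (CV_radius (PS_Int fco))).
  { rewrite CV_radius_Int. apply fco_radius. rewrite Rabs_pos_eq; lra. }
  destruct (CV_radius_inside _ _ Hr) as [l Hl]. apply is_pseries_eq in Hl.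
  assert (E : RInt Ft 0 z = l). { rewrite RInt_0z by auto. rewrite PSeries_eq. apply is_series_unique; auto. }
  rewrite E. eapply is_series_ext; [|apply (is_series_scalR c _ _ Hl)]. intro; simpl; ring.
Qed.

Lemma I_split z : 0 <= z <= 1 -> I z = RInt Ft 0 1 - RInt Ft 0 z.
Proof.
  intro Hz. unfold I.
  assert (E : RInt Ft 0 z + RInt Ft z 1 = RInt Ft 0 1) by (apply (@RInt_Chasles R_CompleteNormedModule); apply Ft_exRInt; lra).
  lra.
Qed.

Lemma a_series c : 0 < c -> (forall n, 0 <= c * PS_Int fco n) /\ is_series (fun n => c * PS_Int fco n) (c * RInt Ft 0 1).
Proof.
  intro Hc. set (lam := c * RInt Ft 0 1).
  assert (Hnn : forall n, 0 <= c * PS_Int fco n).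
  { intro n. apply Rmult_le_pos. lra. destruct n. simpl; lra. change (PS_Int fco (S n)) with (fco n / INR (S n)). apply Rle_mult_inv_pos. apply fco_nn. apply lt_0_INR; lia. }
  split; auto.
  assert (Hps : forall z, 0 < z < 1 -> Series (fun k => c * PS_Int fco k * z ^ k) = lam - c * I z).
  { intros z Hz. rewrite (is_series_unique _ _ (ps_at c z Hz)). rewrite I_split by lra. unfold lam. ring. }
  destruct (bounded_pseries (fun n => c * PS_Int fco n) lam Hnn) as [He Hle].
  { intros z Hz. split. exists (c * RInt Ft 0 z). apply ps_at; auto.
    rewrite Hps by auto. pose proof (I_nn z ltac:(lra)). assert (0 <= c * I z) by (apply Rmult_le_pos; lra). lra. }
  assert (Hge : lam <= Series (fun n => c * PS_Int fco n)).
  { apply Rnot_lt_le. intro Hlt.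
    set (S := Series (fun n => c * PS_Int fco n)) in *.
    assert (HIc : continuity_pt I 1).
    { apply cont_pt_eq. apply (@ex_derive_continuous R_AbsRing R_NormedModule). eexists. apply I_deriv. lra. }
    destruct (cont_eps I 1 HIc ((lam - S) / (2 * c))) as [d [Hd Hd2]]. apply Rdiv_lt_0_compat; lra.
    set (z := Rmax (1/2) (1 - d/2)).
    assert (Hz : 0 < z < 1) by (unfold z; unfold Rmax; destruct (Rle_dec (1/2) (1 - d/2)); lra).
    assert (Hzd : Rabs (z - 1) < d) by (apply Rabs_def1; unfold z, Rmax; destruct (Rle_dec (1/2) (1 - d/2)); lra).
    specialize (Hd2 z Hzd). rewrite I_1, Rminus_0_r in Hd2. apply Rabs_def2 in Hd2.
    pose proof (Hps z Hz) as E.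
    assert (Series (fun k => c * PS_Int fco k * z ^ k) <= S) by (apply pseries_le_series; auto; lra).
    assert (c * I z < c * ((lam - S) / (2 * c))) by (apply Rmult_lt_compat_l; lra).
    replace (c * ((lam - S) / (2 * c))) with ((lam - S) / 2) in H0 by (field; lra).
    lra. }
  replace lam with (Series (fun n => c * PS_Int fco n)) by lra. apply Series_correct; auto.
Qed.

Lemma exp_series l Q : is_series (fun j => exp (- l) * / INR (Factorial.fact j) * Q ^ j) (exp (- l) * exp Q).
Proof.
  pose proof (is_exp_Reals Q) as H. apply is_pseries_eq in H.
  eapply is_series_ext; [|apply (is_series_scalR (exp (- l)) _ _ H)]. intro; simpl; ring.
Qed.

Lemma cont_within01 (f : R -> R) x : continuity_pt f x ->
  forall eps, 0 < eps -> exists d, 0 < d /\ forall y, 0 < y < 1 -> Rabs (y - x) < d -> Rabs (f y - f x) < eps.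
Proof.
  intros H eps He. destruct (cont_eps f x H eps He) as [d [Hd H2]]. exists d; split; auto.
Qed.

Lemma pgf_cont_nn g : (forall k, 0 <= g k) -> (forall z, 0 < z < 1 -> ex_series (fun k => g k * z ^ k)) ->
  forall x, Rabs x < 1 -> continuity_pt (pgf g) x.
Proof.
  intros Hg He x Hx. apply (continuity_pt_ext (PSeries g)). intro y. rewrite PSeries_eq. reflexivity.
  apply PSeries_continuity. apply good_radius; auto.
Qed.

Lemma g_exists c : 0 < c -> exists g, is_distr g /\ (forall z, 0 <= z <= 1 -> pgf g z = G c z).
Proof.
  intro Hc. destruct (a_series c Hc) as [Hann Has].
  set (a := fun n => c * PS_Int fco n) in *. set (lam := c * RInt Ft 0 1) in *.
  set (w := fun j => exp (- lam) * / INR (Factorial.fact j)).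
  assert (Hw : forall j, 0 <= w j).
  { intro j. unfold w. apply Rmult_le_pos. left; apply exp_pos. left; apply Rinv_0_lt_compat. apply INR_fact_lt_0. }
  assert (Hae : ex_series a) by (exists lam; auto).
  assert (Hcomp : forall z, 0 < z <= 1 ->
     (forall n, ex_series (fun j => w j * convpow a j n)) /\
     is_series (fun n => Series (fun j => w j * convpow a j n) * z ^ n) (exp (- lam) * exp (Series (fun k => a k * z ^ k)))).
  { intros z Hz. apply (pgf_compound w a z (Series (fun k => a k * z ^ k))); auto. lra. apply Series_correct. apply ex_pseries01; auto. lra.
    apply exp_series. }
  set (g := fun n => Series (fun j => w j * convpow a j n)).
  assert (Hg0 : forall n, 0 <= g n).
  { intro n. apply Series_ge0. intro j. apply Rmult_le_pos; auto. apply convpow_nn; auto. apply (Hcomp 1); lra. }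
  assert (Hgs : forall z, 0 < z < 1 -> is_series (fun k => g k * z ^ k) (G c z)).
  { intros z Hz. replace (G c z) with (exp (- lam) * exp (Series (fun k => c * PS_Int fco k * z ^ k))).
    apply (Hcomp z); lra.
    rewrite (is_series_unique _ _ (ps_at c z Hz)). unfold G. rewrite <- exp_plus. f_equal.
    rewrite I_split by lra. unfold lam. ring. }
  exists g. split. split; auto.
  - destruct (Hcomp 1 ltac:(lra)) as [_ H].
    replace (Series (fun k => a k * 1 ^ k)) with lam in H.
    rewrite <- exp_plus, Rplus_opp_l, exp_0 in H.
    eapply is_series_ext; [|apply H]. intro n; cbv beta; unfold g; rewrite pow1, Rmult_1_r; reflexivity.
    symmetry. rewrite (Series_ext _ a). apply is_series_unique; auto. intro; rewrite pow1; ring.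
  - intros z Hz. destruct (Rlt_dec 0 z) as [Hz0|Hz0]; [destruct (Rlt_dec z 1) as [Hz1|Hz1]|].
    + apply is_series_unique. apply Hgs; lra.
    + replace z with 1 by lra. rewrite G_1. unfold pgf.
      destruct (Hcomp 1 ltac:(lra)) as [_ H].
      replace (Series (fun k => a k * 1 ^ k)) with lam in H.
      rewrite <- exp_plus, Rplus_opp_l, exp_0 in H. apply is_series_unique; auto.
      symmetry. rewrite (Series_ext _ a). apply is_series_unique; auto. intro; rewrite pow1; ring.
    + replace z with 0 by lra.
      apply (lim_eq (pgf g) (G c) 0). lra.
      apply cont_within01. apply pgf_cont_nn; auto. intros y Hy. exists (G c y). apply Hgs; auto.
      rewrite Rabs_R0; lra.
      apply cont_within01. apply cont_pt_eq. apply G_cont. lra.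
      intros y Hy. apply is_series_unique. apply Hgs; auto.
Qed.

Lemma exp_pow x n : exp x ^ n = exp (INR n * x).
Proof.
  induction n. simpl. rewrite Rmult_0_l, exp_0. auto.
  rewrite S_INR. simpl. rewrite IHn, <- exp_plus. f_equal. ring.
Qed.

Lemma pgf_series g z : is_distr g -> 0 <= z <= 1 -> is_series (fun k => g k * z ^ k) (pgf g z).
Proof. intros Hg Hz. apply pgf_is; auto. Qed.

Lemma inf_div_part c : 0 < c -> forall g, is_distr g -> (forall z, 0 <= z <= 1 -> pgf g z = G c z) -> inf_divisible g.
Proof.
  intros Hc g Hg Hpg n Hn.
  assert (HnR : 0 < INR n) by (apply lt_0_INR; lia).
  destruct (g_exists (c / INR n)) as [h [Hh Hph]]. apply Rdiv_lt_0_compat; auto.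
  exists h. split; auto.
  apply pgf_unique.
  - apply convpow_nn. apply d_nn; auto.
  - apply d_nn; auto.
  - intros z Hz. eexists. apply pgf_convpow. apply d_nn; auto. lra. apply pgf_series; auto; lra.
  - intros z Hz. apply pgf_ex; auto; lra.
  - intros z Hz. rewrite (is_series_unique _ _ (pgf_convpow h z (pgf h z) (d_nn h Hh) ltac:(lra) (pgf_series h z Hh ltac:(lra)) n)).
    fold (pgf g z). rewrite Hph, Hpg by lra. unfold G. rewrite exp_pow. f_equal. field. lra.
Qed.

Lemma deriv_part c (Hc : 0 < c) g (Hg : is_distr g) (Hpg : forall z, 0 <= z <= 1 -> pgf g z = G c z) :
  (forall z, 0 < z < 1 -> is_series (fun k => PS_derive g k * z ^ k) (G c z * (c * Ft z))) /\
  ex_series (PS_derive g) /\ Series (PS_derive g) = c * Lc.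
Proof.
  assert (Hrad : forall x, Rabs x < 1 -> Rbar_lt (Rabs x) (CV_radius g)).
  { apply good_radius. apply d_nn; auto. intros r Hr. apply pgf_ex; auto; lra. }
  assert (HD : forall z, 0 < z < 1 -> is_series (fun k => PS_derive g k * z ^ k) (G c z * (c * Ft z))).
  { intros z Hz. assert (Hzr : Rabs z < 1) by (rewrite Rabs_pos_eq; lra).
    assert (H1 := is_derive_PSeries g z (Hrad z Hzr)).
    assert (H2 : is_derive (G c) z (PSeries (PS_derive g) z)).
    { apply (is_derive_ext_loc (PSeries g)); auto.
      apply (locally_ball z (Rmin z (1 - z))). apply Rmin_pos; lra.
      intros y Hy. pose proof (Rmin_l z (1 - z)). pose proof (Rmin_r z (1 - z)). apply Rabs_def2 in Hy.
      rewrite PSeries_eq. fold (pgf g y). apply Hpg. lra. }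
    pose proof (is_derive_unique _ _ _ H2) as E1. rewrite (is_derive_unique _ _ _ (G_deriv c z ltac:(lra))) in E1.
    rewrite E1. apply is_pseries_eq. apply PSeries_correct. apply CV_radius_inside. rewrite CV_radius_derive. auto. }
  assert (Hnn : forall k, 0 <= PS_derive g k).
  { intro k. unfold PS_derive. apply Rmult_le_pos. apply pos_INR. apply d_nn; auto. }
  destruct (bounded_pseries (PS_derive g) (c * Lc) Hnn) as [He _].
  { intros z Hz. split. eexists; apply HD; auto. rewrite (is_series_unique _ _ (HD z Hz)).
    destruct (G_bounds c z ltac:(lra) ltac:(lra)). destruct (Ft_bounds z ltac:(lra)).
    pose proof Lc_pos.
    replace (c * Lc) with (1 * (c * Lc)) by ring. apply Rmult_le_compat; try lra.
    apply Rmult_le_pos; lra. apply Rmult_le_compat_l; lra. }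
  split; auto. split; auto.
  set (S := Series (PS_derive g)).
  assert (E2 : Series (fun k => PS_derive g k * 1 ^ k) = G c 1 * (c * Ft 1)).
  { apply (lim_eq (fun z => Series (fun k => PS_derive g k * z ^ k)) (fun z => G c z * (c * Ft z)) 1). lra.
    - intros eps Heps. destruct (abel_nn (PS_derive g) S Hnn (Series_correct _ He) eps Heps) as [d [Hd H]].
      exists d. split; auto. intros y Hy Hyd.
      rewrite (Series_ext (fun k => PS_derive g k * 1 ^ k) (PS_derive g)) by (intro; rewrite pow1; ring).
      apply H. apply Rabs_def2 in Hyd. lra.
    - apply (cont_within01 (fun z => G c z * (c * Ft z)) 1). apply dg_cont. lra.
    - intros y Hy. apply is_series_unique. apply HD; auto. }
  rewrite G_1, Ft_ge in E2 by lra.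
  rewrite (Series_ext _ (PS_derive g)) in E2 by (intro; rewrite pow1; ring).
  unfold S; rewrite E2. apply Rmult_1_l.
Qed.

Lemma sb_part m0 (Hm0 : 0 < m0) g (Hg : is_distr g)
  (Hpg : forall z, 0 <= z <= 1 -> pgf g z = G (m0 * (b2 / b1)) z) :
  ex_series (fun k => INR k * g k) /\
      (forall pzeta pgam pxi : nat -> R,
          is_distr pzeta -> is_distr pgam -> is_distr pxi ->
          (forall z, 0 <= z <= 1 -> pgf pzeta z = Qstar pX pY b1 b2 z) ->
          (forall z, 0 <= z <= 1 ->
             pgf pgam z = (1 - mean pX) / (1 - mean pX * z)) ->
          (forall z, 0 <= z <= 1 -> pgf pxi z = Pstar pX z) ->
          forall n : nat,
            size_biased g n
            = conv g (conv (dirac 1) (conv pzeta (compound pgam pxi))) n).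
Proof.
  set (c := m0 * (b2 / b1)).
  assert (Hc : 0 < c) by (unfold c; apply Rmult_lt_0_compat; auto; apply Rdiv_lt_0_compat; auto).
  destruct (deriv_part c Hc g Hg Hpg) as [HD [He HS]].
  assert (HcL : c * Lc = m0) by (unfold c; rewrite Lc_eq; field; lra).
  assert (Hex : ex_series (fun k => INR k * g k)) by (apply (proj2 (ex_series_incr_1 _)); exact He).
  assert (Hmean : mean g = m0).
  { unfold mean. rewrite Series_incr_1 by auto. simpl INR. rewrite Rmult_0_l, Rplus_0_l.
    rewrite <- HcL, <- HS. apply Series_ext. intro; reflexivity. }
  split; auto.
  intros pzeta pgam pxi Hzt Hgam Hxi Hpz Hpgam Hpxi n.
  pose proof m_lt1 as Hm1. pose proof m_nn as Hm0'.
  assert (Hm : 0 < mean pX).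
  { destruct (Req_dec (mean pX) 0) as [E|E]; [|lra]. exfalso.
    specialize (Hpxi 1 ltac:(lra)). rewrite pgf_1 in Hpxi by auto. unfold Pstar in Hpxi.
    rewrite E in Hpxi. unfold Rdiv in Hpxi. rewrite Rinv_0, Rmult_0_r in Hpxi. lra. }
  assert (HsS : forall z, 0 < z < 1 -> is_series (fun k => INR k * g k / m0 * z ^ k) (z * (G c z * (c * Ft z)) / m0)).
  { intros z Hz. apply is_series_decr_1.
    pose proof (is_series_scal_r (z / m0) _ _ (HD z Hz)) as H.
    match goal with |- is_series _ ?l => replace l with (G c z * (c * Ft z) * (z / m0)) end.
    eapply is_series_ext; [|apply H]. intro k. unfold PS_derive. simpl. field. lra.
    unfold plus, opp; simpl. field. lra. }
  assert (Hrs : forall z, 0 < z < 1 -> is_series (fun k => conv g (conv (dirac 1) (conv pzeta (compound pgam pxi))) k * z ^ k)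
      (G c z * (z * (Qstar pX pY b1 b2 z * ((1 - mean pX) / (1 - mean pX * Pstar pX z)))))).
  { intros z Hz.
    set (Q := pgf pxi z).
    assert (HQ : 0 <= Q <= 1) by (apply pgf_le1; auto; lra).
    destruct (pgf_compound pgam pxi z Q (pgf pgam Q) (d_nn _ Hgam) (d_nn _ Hxi) ltac:(lra) (pgf_series pxi z Hxi ltac:(lra)) (pgf_series pgam Q Hgam HQ)) as [Hce Hcs].
    assert (Hcnn : forall k, 0 <= compound pgam pxi k).
    { intro k. apply Series_ge0; auto. intro j. apply Rmult_le_pos. apply d_nn; auto. apply convpow_nn, d_nn; auto. }
    rewrite Hpgam in Hcs by auto. unfold Q in Hcs. rewrite Hpxi in Hcs by lra.
    apply pgf_conv. apply d_nn; auto. apply conv_nn. apply dirac_nn. apply conv_nn. apply d_nn; auto. auto. lra.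
    rewrite <- Hpg by lra. apply pgf_series; auto; lra.
    apply pgf_conv. apply dirac_nn. apply conv_nn. apply d_nn; auto. auto. lra. apply dirac1_series.
    apply pgf_conv. apply (d_nn _ Hzt). auto. lra. rewrite <- Hpz by lra. apply pgf_series; auto; lra.
    exact Hcs. }
  unfold size_biased. rewrite Hmean. revert n.
  apply pgf_unique.
  - intro k. apply Rmult_le_pos. apply Rmult_le_pos. apply pos_INR. apply d_nn; auto. left; apply Rinv_0_lt_compat; auto.
  - apply conv_nn. apply d_nn; auto. apply conv_nn. apply dirac_nn. apply conv_nn. apply d_nn; auto.
    intro k. apply Series_ge0. intro j. apply Rmult_le_pos. apply d_nn; auto. apply convpow_nn, d_nn; auto.
    destruct (pgf_compound pgam pxi (1/2) (pgf pxi (1/2)) (pgf pgam (pgf pxi (1/2))) (d_nn _ Hgam) (d_nn _ Hxi) ltac:(lra) (pgf_series pxi (1/2) Hxi ltac:(lra)) (pgf_series pgam _ Hgam (pgf_le1 pxi Hxi (1/2) ltac:(lra)))) as [Hce _]. apply Hce.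
  - intros z Hz. eexists. apply HsS; auto.
  - intros z Hz. eexists. apply Hrs; auto.
  - intros z Hz. rewrite (is_series_unique _ _ (HsS z Hz)), (is_series_unique _ _ (Hrs z Hz)).
    rewrite Ft_lt by lra. unfold Fr, Qstar, Pstar, c.
    pose proof (den_pos z ltac:(rewrite Rabs_pos_eq; lra)) as Hd.
    assert (mean pX - mean pX * phi pX z <> 0) by nra.
    field. repeat split; lra.
Qed.


End Main.

Lemma mean_ex p : is_distr p -> finite_second_moment p -> ex_series (fun k => INR k * p k).
Proof.
  intros Hp H2. apply (@ex_series_le R_AbsRing R_CompleteNormedModule _ (fun k => INR k ^ 2 * p k)); [|exact H2].
  intro n. change norm with Rabs. cbv beta. pose proof (d_nn p Hp n). pose proof (pos_INR n).
  rewrite Rabs_pos_eq by nra.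
  destruct (Nat.eq_dec n 0) as [->|Hn]. simpl. lra.
  assert (1 <= INR n) by (apply (le_INR 1); lia).
  assert (INR n <= INR n ^ 2) by (simpl; nra). nra.
Qed.

Theorem proposition5p2
  (pX pY : nat -> R) (b1 b2 m0 : R)
  (HX : is_distr pX) (HY : is_distr pY)
  (HX2 : finite_second_moment pX) (HY2 : finite_second_moment pY)
  (Hb1 : 0 < b1) (Hb2 : 0 < b2) (Hm0 : 0 < m0)
  (HYnd : 0 < mean pY)
  (Hcrit : b1 * (mean pX - 1) + b2 * mean pY = 0) :
  (* ghat is a C^1 solution on [0,1] with ghat(1) = 1 ... *)
  (exists dg : R -> R,
      C1_on01 (ghat pX pY b1 b2 m0) dg /\
      solves_stationary pX pY b1 b2 m0 (ghat pX pY b1 b2 m0) dg) /\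
  ghat pX pY b1 b2 m0 1 = 1 /\
  (* ... and it is the unique one *)
  (forall h dh : R -> R,
      C1_on01 h dh -> h 1 = 1 -> solves_stationary pX pY b1 b2 m0 h dh ->
      forall z, 0 <= z <= 1 -> h z = ghat pX pY b1 b2 m0 z) /\
  (* ghat is the pgf of an infinitely divisible distribution g on N *)
  (exists g : nat -> R,
      is_distr g /\
      (forall z, 0 <= z <= 1 -> pgf g z = ghat pX pY b1 b2 m0 z) /\
      inf_divisible g /\
      ex_series (fun k => INR k * g k) /\
      (* size-biased identity V* =d V + 1 + zeta + sum_{k=1}^gamma xi_k,
         with V ~ g, zeta ~ Q*, gamma ~ Geom(m), xi_k ~ P*, all independent *)
      (forall pzeta pgam pxi : nat -> R,
          is_distr pzeta -> is_distr pgam -> is_distr pxi ->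
          (forall z, 0 <= z <= 1 -> pgf pzeta z = Qstar pX pY b1 b2 z) ->
          (forall z, 0 <= z <= 1 ->
             pgf pgam z = (1 - mean pX) / (1 - mean pX * z)) ->
          (forall z, 0 <= z <= 1 -> pgf pxi z = Pstar pX z) ->
          forall n : nat,
            size_biased g n
            = conv g (conv (dirac 1) (conv pzeta (compound pgam pxi))) n)).
Proof.
  assert (HmX := mean_ex pX HX HX2). assert (HmY := mean_ex pY HY HY2).
  split; [|split; [|split]].
  - apply sol_exists; auto.
  - rewrite ghat_G by (auto; lra). apply G_1.
  - apply sol_unique; auto.
  - set (c := m0 * (b2 / b1)).
    assert (Hc : 0 < c) by (unfold c; apply Rmult_lt_0_compat; auto; apply Rdiv_lt_0_compat; auto).
    destruct (g_exists pX pY b1 b2 HX HY HmX HmY Hb1 Hb2 HYnd Hcrit c Hc) as [g [Hg Hpg]].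
    exists g. split; auto.
    split. intros z Hz. rewrite ghat_G by auto. apply Hpg; auto.
    split. apply (inf_div_part pX pY b1 b2 HX HY HmX HmY Hb1 Hb2 HYnd Hcrit c Hc g Hg Hpg).
    apply (sb_part pX pY b1 b2 HX HY HmX HmY Hb1 Hb2 HYnd Hcrit m0 Hm0 g Hg Hpg).
Qed.
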